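(* Consider the scalar linear system $$\frac{dx(t)}{dt} = A\,x(t) + B_p\,p(t) + B_d\,d(t),\qquad t\in\mathcal{T}=[0,t_f],$$ with scalar constants $A\le 0$ and $B_p\ge 0$, a given disturbance $d$ and a given initial state $x(0)=x_0$. Fix bounds $0\le p_{\min}\le p_{\max}$ and $x_{\min}\le x_{\max}$. Let $p_+$ and $p_-$ be feasible power trajectories: $p_{\min}\le p_\pm(t)\le p_{\max}$ for all $t\in\mathcal{T}$, and the resulting states $x_\pm$ (same $x_0$ and $d$) satisfy $x_{\min}\le x_\pm(t)\le x_{\max}$ for all $t\in\mathcal{T}$. Let $p_a$ be a power trajectory with $p_{\min}\le p_a(t)\le p_{\max}$ for all $t$, and let $x_a$ be the resulting state (same $x_0$ and $d$). If for all $t\in\mathcal{T}$ $$\mathrm{E}^{\mathrm{TI}}_{\mathrm{down}}(t):=\int_0^t e^{-A\tau}p_-(\tau)\,d\tau \;\le\; \int_0^t p_a(\tau)\,d\tau \;\le\; \int_0^t e^{A(t-\tau)}p_+(\tau)\,d\tau =: \mathrm{E}^{\mathrm{TI}}_{\mathrm{up}}(t),$$ then $x_{\min}\le x_a(t)\le x_{\max}$ for all $t\in\mathcal{T}$; that is, $\mathrm{E}^{\mathrm{TI}}_{\mathrm{up}}$ and $\mathrm{E}^{\mathrm{TI}}_{\mathrm{down}}$ are trajectory-independent energy flexibility bounds.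
   Context: All power trajectories are (integrable) functions on $\mathcal{T}$; states are the solutions $x(t)=e^{At}x_0+\int_0^t e^{A(t-\tau)}(B_d d(\tau)+B_p p(\tau))\,d\tau$ of the state equation. ''Trajectory-independent (TI) energy bounds'' means: every power trajectory satisfying the power constraints whose cumulative energy $\int_0^t p$ lies between the bounds for all $t$ satisfies the state constraints. *)

(* Defs.v *)
From HB Require Import structures.
From mathcomp Require Import all_boot all_order all_algebra.
From mathcomp Require Import all_classical all_reals all_analysis.
Set Implicit Arguments. Unset Strict Implicit. Unset Printing Implicit Defensive.
Import Order.TTheory GRing.Theory Num.Theory.
Local Open Scope classical_set_scope.
Local Open Scope ring_scope.

Definition integral_on {R : realType} (a b : R) (f : R -> R) : R :=
  Rintegral (@lebesgue_measure R) `[a, b] f.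

Definition integrable_on {R : realType} (a b : R) (f : R -> R) : Prop :=
  (@lebesgue_measure R).-integrable `[a, b] (EFin \o f).

(* State of the scalar system dx/dt = A x + Bp p + Bd d, x(0) = x0, given by
   x(t) = e^{At} x0 + int_0^t e^{A(t - tau)} (Bd d(tau) + Bp p(tau)) dtau. *)
Definition state {R : realType} (A Bp Bd x0 : R) (d p : R -> R) (t : R) : R :=
  expR (A * t) * x0
  + integral_on 0 t (fun tau => expR (A * (t - tau)) * (Bd * d tau + Bp * p tau)).

(* Main.v *)
Require Import Defs.
From HB Require Import structures.
From mathcomp Require Import all_boot all_order all_algebra.
From mathcomp Require Import all_classical all_reals all_analysis.
Import Order.TTheory GRing.Theory Num.Theory.
Local Open Scope classical_set_scope.
Local Open Scope ring_scope.
Import numFieldNormedType.Exports.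
From mathcomp Require Import measurable_realfun ring lra.
Lemma integ_sub (R : realType) (t tf : R) f : 0 <= t <= tf ->
  integrable_on 0 tf f -> integrable_on 0 t f.
Proof.
move=> /andP[t0 ttf] If; apply: (integrableS _ _ _ If) => //.
by apply: subset_itvl; rewrite bnd_simp.
Qed.

Lemma integ_mul (R : realType) (t : R) (h f : R -> R) : continuous h ->
  integrable_on 0 t f -> integrable_on 0 t (fun x => h x * f x).
Proof.
move=> ch If.
have := @integrableMr _ _ R (@lebesgue_measure R) `[0, t] (measurable_itv _) h (EFin \o f).
have -> : ((EFin \o h) \* (EFin \o f))%E = EFin \o (fun x => h x * f x) by apply/funext.
apply.
- by apply: subspace_continuous_measurable_fun => //; exact: continuous_subspaceT.
- have cA : {within `[0, t], continuous h} by apply: continuous_subspaceT.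
  have /compact_bounded[M [_ mrt]] := continuous_compact cA (@segment_compact _ 0 t).
  by exists M; split; rewrite ?num_real // => ? ? ? ?; exact: mrt.
- exact: If.
Qed.
Arguments integ_sub {R t tf f}.
Lemma contE (R : realType) (a b : R) : continuous (fun x : R => expR (a * x + b)).
Proof.
move=> x; apply: continuous_comp; last exact: continuous_expR.
apply: continuousD; last exact: cst_continuous.
apply: continuousM; [exact: cst_continuous | exact: id].
Qed.
Lemma contE1 (R : realType) (A t : R) : continuous (fun x : R => expR (A * (t - x))).
Proof.
have -> : (fun x : R => expR (A * (t - x))) = (fun x => expR ((- A) * x + A * t)).
  by apply/funext => x; congr expR; ring.
exact: contE.
Qed.

Lemma state_split (R : realType) (A Bp Bd x0 t : R) (d p : R -> R) :
  integrable_on 0 t d -> integrable_on 0 t p ->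
  state A Bp Bd x0 d p t = expR (A * t) * x0
   + integral_on 0 t (fun x => expR (A * (t - x)) * Bd * d x)
   + Bp * integral_on 0 t (fun x => expR (A * (t - x)) * p x).
Proof.
move=> Id Ip; rewrite /state /integral_on -addrA; congr (_ + _).
have I1 : integrable_on 0 t (fun x => expR (A * (t - x)) * Bd * d x).
  apply: (@integ_mul _ _ (fun x => expR (A * (t - x)) * Bd)) Id.
  move=> z; apply: (@continuousM _ _ (fun x => expR (A * (t - x))) (fun=> Bd) z); [exact: contE1 | exact: cst_continuous].
have I2 : integrable_on 0 t (fun x => expR (A * (t - x)) * p x).
  by apply: integ_mul Ip; exact: contE1.
have I3 : integrable_on 0 t (fun x => Bp * (expR (A * (t - x)) * p x)).
  have -> : (fun x => Bp * (expR (A * (t - x)) * p x)) = (fun x => Bp * expR (A * (t - x)) * p x) by apply/funext => x; ring.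
  apply: (@integ_mul _ _ (fun x => Bp * expR (A * (t - x)))) Ip.
  move=> z; apply: (@continuousM _ _ (fun=> Bp) (fun x => expR (A * (t - x))) z); [exact: cst_continuous | exact: contE1].
rewrite -RintegralZl //.
rewrite -RintegralD //.
by apply: eq_Rintegral => x _; ring.
Qed.
Theorem theorem1 (R : realType) (tf A Bp Bd x0 pmin pmax xmin xmax : R)
  (d pplus pminus pa : R -> R) :
  A <= 0 -> 0 <= Bp ->
  0 <= pmin -> pmin <= pmax -> xmin <= xmax ->
  integrable_on 0 tf d ->
  integrable_on 0 tf pplus -> integrable_on 0 tf pminus -> integrable_on 0 tf pa ->
  (* p_+ and p_- are feasible *)
  (forall t, 0 <= t <= tf -> pmin <= pplus t <= pmax) ->
  (forall t, 0 <= t <= tf -> xmin <= state A Bp Bd x0 d pplus t <= xmax) ->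
  (forall t, 0 <= t <= tf -> pmin <= pminus t <= pmax) ->
  (forall t, 0 <= t <= tf -> xmin <= state A Bp Bd x0 d pminus t <= xmax) ->
  (* p_a satisfies the power constraints *)
  (forall t, 0 <= t <= tf -> pmin <= pa t <= pmax) ->
  (* p_a's cumulative energy lies between the TI bounds *)
  (forall t, 0 <= t <= tf ->
     integral_on 0 t (fun tau => expR (- A * tau) * pminus tau)
       <= integral_on 0 t pa
       <= integral_on 0 t (fun tau => expR (A * (t - tau)) * pplus tau)) ->
  forall t, 0 <= t <= tf -> xmin <= state A Bp Bd x0 d pa t <= xmax.
Proof.
move=> A0 Bp0 pmin0 _ _ Id Ipp Ipm Ipa _ Sp _ Sm Fa En t ht.
have [t0 ttf] := andP ht.
have Id' := integ_sub ht Id.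
have Ipp' := integ_sub ht Ipp.
have Ipm' := integ_sub ht Ipm.
have Ipa' := integ_sub ht Ipa.
have paD : forall x, `[0, t]%classic x -> 0 <= pa x.
  move=> x /=; rewrite in_itv /= => /andP[x0' xt].
  have /Fa /andP[h _] : 0 <= x <= tf by rewrite x0'; exact: le_trans xt ttf.
  exact: le_trans h.
have IE : forall p, integrable_on 0 t p ->
    integrable_on 0 t (fun x => expR (A * (t - x)) * p x).
  by move=> p Ip; apply: integ_mul Ip; exact: contE1.
have IEm : forall p, integrable_on 0 t p ->
    integrable_on 0 t (fun x => expR (- A * x) * p x).
  move=> p Ip; apply: integ_mul Ip.
  have -> : (fun x : R => expR (- A * x)) = (fun x => expR (- A * x + 0)).
    by apply/funext => x; rewrite addr0.
  exact: contE.
have /andP[Elo Eup] := En t ht.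
have Up : integral_on 0 t (fun x => expR (A * (t - x)) * pa x)
          <= integral_on 0 t (fun x => expR (A * (t - x)) * pplus x).
  apply: le_trans Eup.
  apply: le_Rintegral => //; [exact: IE|] => x Dx.
  rewrite -[leRHS]mul1r ler_wpM2r ?paD // expR_le1.
  move: Dx => /=; rewrite in_itv /= => /andP[_ xt].
  by rewrite mulr_le0_ge0 // subr_ge0.
have Lo : integral_on 0 t (fun x => expR (A * (t - x)) * pminus x)
          <= integral_on 0 t (fun x => expR (A * (t - x)) * pa x).
  have -> : integral_on 0 t (fun x => expR (A * (t - x)) * pminus x)
       = expR (A * t) * integral_on 0 t (fun x => expR (- A * x) * pminus x).
    rewrite /integral_on -RintegralZl //; last exact: IEm.
    by apply: eq_Rintegral => x _; rewrite mulrA -expRD; congr (expR _ * _); ring.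
  have -> : integral_on 0 t (fun x => expR (A * (t - x)) * pa x)
       = expR (A * t) * integral_on 0 t (fun x => expR (- A * x) * pa x).
    rewrite /integral_on -RintegralZl //; last exact: IEm.
    by apply: eq_Rintegral => x _; rewrite mulrA -expRD; congr (expR _ * _); ring.
  rewrite ler_wpM2l ?expR_ge0 //; apply: le_trans Elo _.
  apply: le_Rintegral => //; [exact: IEm|] => x Dx.
  rewrite -[leLHS]mul1r ler_wpM2r ?paD // -expR0 ler_expR.
  move: Dx => /=; rewrite in_itv /= => /andP[x0' _].
  by rewrite mulr_ge0 // oppr_ge0.
have /andP[Sp1 Sp2] := Sp t ht.
have /andP[Sm1 Sm2] := Sm t ht.
move: Sp1 Sp2 Sm1 Sm2.
rewrite !state_split //.
set a := integral_on 0 t (fun x => expR (A * (t - x)) * pa x) in Up Lo *.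
set b := integral_on 0 t (fun x => expR (A * (t - x)) * pplus x) in Up Lo *.
set c := integral_on 0 t (fun x => expR (A * (t - x)) * pminus x) in Up Lo *.
move=> h1 h2 h3 h4; apply/andP; split.
  apply: le_trans h3 _; rewrite lerD2l; exact: ler_wpM2l.
apply: le_trans h2; rewrite lerD2l; exact: ler_wpM2l.
Qed.
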